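(* Let $G:[0,\nu)\to[0,\infty)$ be strictly increasing with $G(0)=0$, twice differentiable with $G'(x)>0$ for all $x\in(0,\nu)$, and with range $[0,\infty)$. Then the function $x\mapsto G^{-1}(G(x)+G(c))$ is concave for all $c>0$ if and only if the function $u(x)=1/G'(x)$ is concave. *)

(* Defs.v *)
From Stdlib Require Import Reals Lra.
From Coquelicot Require Import Coquelicot.
Open Scope R_scope.

Definition dom (nu : Rbar) (x : R) : Prop := 0 <= x /\ Rbar_lt x nu.

Definition odom (nu : Rbar) (x : R) : Prop := 0 < x /\ Rbar_lt x nu.

Definition concave_on (D : R -> Prop) (f : R -> R) : Prop :=
  forall x y t, D x -> D y -> 0 <= t <= 1 ->
    t * f x + (1 - t) * f y <= f (t * x + (1 - t) * y).

(* Main.v *)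
Require Import Defs.
From Stdlib Require Import Reals Lra Ranalysis5.
From Coquelicot Require Import Coquelicot.
Open Scope R_scope.

Lemma odom_between nu a b z : odom nu a -> odom nu b -> a <= z <= b -> odom nu z.
Proof.
  intros [Ha1 Ha2] [Hb1 Hb2] [H1 H2]. split; [lra|].
  apply Rbar_le_lt_trans with (Finite b); [simpl; lra | exact Hb2].
Qed.

Lemma Dright g x l S d : is_derive g x l -> 0 < d ->
  (forall h, 0 < h < d -> h * S <= g (x + h) - g x) -> S <= l.
Proof.
  intros Hd Hpos H. apply Rnot_lt_le; intro Hl.
  apply is_derive_Reals in Hd. destruct (Hd (S - l)) as [e He]; [lra|].
  set (h := Rmin (e/2) (d/2)).
  assert (Hh1 : 0 < h) by (unfold h; apply Rmin_glb_lt; destruct e; simpl; lra).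
  assert (Hh2 : h < e) by (unfold h; eapply Rle_lt_trans; [apply Rmin_l|]; destruct e; simpl; lra).
  assert (Hh3 : h < d) by (unfold h; eapply Rle_lt_trans; [apply Rmin_r|]; lra).
  specialize (He h ltac:(lra) ltac:(rewrite Rabs_pos_eq; lra)).
  specialize (H h ltac:(lra)).
  apply Rabs_def2 in He. destruct He as [He1 He2].
  assert (E : (g (x + h) - g x) / h * h = g (x + h) - g x) by (field; lra).
  assert ((g (x + h) - g x) / h < S) by lra. nra.
Qed.

Lemma Dleft g x l S d : is_derive g x l -> 0 < d ->
  (forall h, 0 < h < d -> - h * S <= g (x - h) - g x) -> l <= S.
Proof.
  intros Hd Hpos H. apply Rnot_lt_le; intro Hl.
  apply is_derive_Reals in Hd. destruct (Hd (l - S)) as [e He]; [lra|].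
  set (h := Rmin (e/2) (d/2)).
  assert (Hh1 : 0 < h) by (unfold h; apply Rmin_glb_lt; destruct e; simpl; lra).
  assert (Hh2 : h < e) by (unfold h; eapply Rle_lt_trans; [apply Rmin_l|]; destruct e; simpl; lra).
  assert (Hh3 : h < d) by (unfold h; eapply Rle_lt_trans; [apply Rmin_r|]; lra).
  specialize (He (-h) ltac:(lra) ltac:(rewrite Rabs_Ropp, Rabs_pos_eq; lra)).
  specialize (H h ltac:(lra)).
  apply Rabs_def2 in He. destruct He as [He1 He2].
  replace (x + - h) with (x - h) in He1, He2 by ring.
  assert (E : (g (x - h) - g x) / - h * h = - (g (x - h) - g x)) by (field; lra).
  assert (S < (g (x - h) - g x) / - h) by lra. nra.
Qed.

Lemma conc_mono nu g g' : (forall z, odom nu z -> is_derive g z (g' z)) ->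
  concave_on (odom nu) g -> forall x y, odom nu x -> odom nu y -> x < y -> g' y <= g' x.
Proof.
  intros Hd Hc x y Hx Hy Hxy.
  set (S := (g y - g x) / (y - x)).
  assert (H1 : S <= g' x).
  { apply (Dright g x (g' x) S (y - x)); [apply Hd; auto| lra |].
    intros h Hh. set (t := 1 - h / (y - x)).
    assert (Ht : 0 <= t <= 1).
    { unfold t; split.
      - assert (h / (y - x) <= 1) by (apply Rmult_le_reg_r with (y - x); [lra|]; field_simplify; lra). lra.
      - assert (0 <= h / (y - x)) by (apply Rdiv_le_0_compat; lra). lra. }
    specialize (Hc x y t Hx Hy Ht).
    replace (t * x + (1 - t) * y) with (x + h) in Hc by (unfold t; field; lra).
    assert (E : t * g x + (1 - t) * g y = g x + h * S) by (unfold t, S; field; lra).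
    lra. }
  assert (H2 : g' y <= S).
  { apply (Dleft g y (g' y) S (y - x)); [apply Hd; auto| lra |].
    intros h Hh. set (t := h / (y - x)).
    assert (Ht : 0 <= t <= 1).
    { unfold t; split.
      - apply Rdiv_le_0_compat; lra.
      - apply Rmult_le_reg_r with (y - x); [lra|]; field_simplify; lra. }
    specialize (Hc x y t Hx Hy Ht).
    replace (t * x + (1 - t) * y) with (y - h) in Hc by (unfold t; field; lra).
    assert (E : t * g x + (1 - t) * g y = g y - h * S) by (unfold t, S; field; lra).
    lra. }
  lra.
Qed.

Lemma cont_of_der g z l : is_derive g z l -> continuity_pt g z.
Proof.
  intro H. apply continuity_pt_filterlim. exact (@ex_derive_continuous R_AbsRing R_NormedModule g z (ex_intro _ l H)).
Qed.

Lemma mvt_on nu g g' x y : (forall z, odom nu z -> is_derive g z (g' z)) ->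
  odom nu x -> odom nu y -> x <= y ->
  exists c, x <= c <= y /\ g y - g x = g' c * (y - x).
Proof.
  intros Hd Hx Hy Hxy.
  destruct (MVT_gen g x y g') as [c [Hc E]].
  - intros z Hz. rewrite Rmin_left, Rmax_right in Hz by lra.
    apply Hd. apply (odom_between nu x y); auto; lra.
  - intros z Hz. rewrite Rmin_left, Rmax_right in Hz by lra.
    apply (cont_of_der g z (g' z)). apply Hd. apply (odom_between nu x y); auto.
  - rewrite Rmin_left, Rmax_right in Hc by lra. exists c; auto.
Qed.

Lemma mvt_dec nu h h' : (forall z, odom nu z -> is_derive h z (h' z)) ->
  (forall z, odom nu z -> h' z <= 0) ->
  forall x y, odom nu x -> odom nu y -> x <= y -> h y <= h x.
Proof.
  intros Hd Hn x y Hx Hy Hxy.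
  destruct (mvt_on nu h h' x y Hd Hx Hy Hxy) as [c [Hc E]].
  assert (h' c <= 0) by (apply Hn; apply (odom_between nu x y); auto).
  nra.
Qed.

Lemma conc_of_deriv nu g g' : (forall z, odom nu z -> is_derive g z (g' z)) ->
  (forall z w, odom nu z -> odom nu w -> z <= w -> g' w <= g' z) ->
  concave_on (odom nu) g.
Proof.
  intros Hd Hm.
  assert (core : forall x y t, odom nu x -> odom nu y -> x < y -> 0 <= t <= 1 ->
     t * g x + (1 - t) * g y <= g (t * x + (1 - t) * y)).
  { intros x y t Hx Hy Hxy Ht. set (z := t * x + (1 - t) * y).
    assert (Hz1 : x <= z) by (unfold z; nra).
    assert (Hz2 : z <= y) by (unfold z; nra).
    assert (Hz : odom nu z) by (apply (odom_between nu x y); auto).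
    destruct (mvt_on nu g g' x z Hd Hx Hz Hz1) as [c1 [Hc1 E1]].
    destruct (mvt_on nu g g' z y Hd Hz Hy Hz2) as [c2 [Hc2 E2]].
    assert (Hc : g' c2 <= g' c1).
    { apply Hm; try lra; apply (odom_between nu x y); auto; lra. }
    assert (D1 : z - x = (1 - t) * (y - x)) by (unfold z; ring).
    assert (D2 : y - z = t * (y - x)) by (unfold z; ring).
    rewrite D1 in E1. rewrite D2 in E2.
    assert (K : t * g x + (1 - t) * g y - g z = t * (1 - t) * (y - x) * (g' c2 - g' c1)).
    { replace (t * g x + (1 - t) * g y - g z) with (- t * (g z - g x) + (1 - t) * (g y - g z)) by ring.
      rewrite E1, E2. ring. }
    assert (0 <= t * (1 - t) * (y - x)).
    { apply Rmult_le_pos; [apply Rmult_le_pos|]; lra. }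
    nra. }
  intros x y t Hx Hy Ht.
  destruct (Rtotal_order x y) as [H|[H|H]].
  - apply core; auto.
  - subst y. replace (t * x + (1 - t) * x) with x by ring. lra.
  - specialize (core y x (1 - t) Hy Hx H ltac:(lra)).
    replace (1 - (1 - t)) with t in core by ring.
    replace (t * x + (1 - t) * y) with ((1 - t) * y + t * x) by ring. lra.
Qed.

Lemma ext0 nu f : Rbar_lt 0 nu -> concave_on (odom nu) f ->
  (forall x y, dom nu x -> dom nu y -> x <= y -> f x <= f y) ->
  (forall z, odom nu z -> continuity_pt f z) -> concave_on (dom nu) f.
Proof.
  intros Hnu Hc Hm Hct.
  assert (d0 : dom nu 0) by (split; [lra| exact Hnu]).
  assert (A : forall y t, odom nu y -> 0 <= t <= 1 ->
            t * f 0 + (1 - t) * f y <= f (t * 0 + (1 - t) * y)).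
  { intros y t Hy Ht. destruct Hy as [Hy0 Hynu].
    destruct (Req_dec t 1) as [E|Ht1].
    { subst t. replace (1 * 0 + (1 - 1) * y) with 0 by ring. lra. }
    set (z := t * 0 + (1 - t) * y).
    assert (Hz : odom nu z) by (split; [unfold z; nra | apply Rbar_le_lt_trans with (Finite y); simpl; [unfold z; nra| auto]]).
    apply Rnot_lt_le; intro Hlt.
    set (eta := t * f 0 + (1 - t) * f y - f z).
    assert (Heta : 0 < eta) by (unfold eta; lra).
    destruct (proj1 (continuity_pt_locally f z) (Hct z Hz) (mkposreal eta Heta)) as [dl Hdl].
    set (e := Rmin (dl / 2) (y / 2)).
    assert (He1 : 0 < e) by (unfold e; apply Rmin_glb_lt; destruct dl; simpl; lra).
    assert (He2 : e < dl) by (unfold e; eapply Rle_lt_trans; [apply Rmin_l|]; destruct dl; simpl; lra).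
    assert (He3 : e <= y / 2) by (unfold e; apply Rmin_r).
    assert (Heo : odom nu e) by (apply (odom_between nu e y); [split; auto; apply Rbar_le_lt_trans with (Finite y); simpl; [lra|auto] | split; auto | lra]).
    specialize (Hc e y t Heo (conj Hy0 Hynu) Ht).
    assert (Hm0 : f 0 <= f e) by (apply Hm; auto; [destruct Heo; split; auto; lra | lra]).
    assert (Hb : Rabs (f (t * e + (1 - t) * y) - f z) < eta).
    { apply Hdl. unfold ball; simpl; unfold AbsRing_ball, abs, minus, plus, opp; simpl.
      replace (t * e + (1 - t) * y + - z) with (t * e) by (unfold z; ring).
      rewrite Rabs_pos_eq by nra. destruct dl; simpl in *; nra. }
    apply Rabs_def2 in Hb. unfold eta in Hb. nra. }
  intros x y t Hx Hy Ht.
  destruct (Req_dec x 0) as [Ex|Ex]; destruct (Req_dec y 0) as [Ey|Ey].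
  - subst. replace (t * 0 + (1 - t) * 0) with 0 by ring. lra.
  - subst x. apply A; auto. destruct Hy; split; auto; lra.
  - subst y. specialize (A x (1 - t) ltac:(destruct Hx; split; auto; lra) ltac:(lra)).
    replace (1 - (1 - t)) with t in A by ring.
    replace (t * x + (1 - t) * 0) with ((1 - t) * 0 + t * x) by ring. lra.
  - apply Hc; [destruct Hx|destruct Hy|]; try split; auto; lra.
Qed.

Theorem lemma6 (nu : Rbar) (G Ginv : R -> R)
  (Hnu : Rbar_lt 0 nu)
  (Hmaps : forall x, dom nu x -> 0 <= G x)
  (Hincr : forall x y, dom nu x -> dom nu y -> x < y -> G x < G y)
  (HG0 : G 0 = 0)
  (Hd1 : forall x, odom nu x -> ex_derive G x)
  (Hd2 : forall x, odom nu x -> ex_derive (Derive G) x)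
  (Hpos : forall x, odom nu x -> 0 < Derive G x)
  (Hrange : forall y, 0 <= y -> exists x, dom nu x /\ G x = y)
  (HGinv : forall y, 0 <= y -> dom nu (Ginv y) /\ G (Ginv y) = y) :
  (forall c, odom nu c -> concave_on (dom nu) (fun x => Ginv (G x + G c)))
  <-> concave_on (odom nu) (fun x => / Derive G x).
Proof.
  set (D1 := Derive G). set (D2 := Derive D1).
  assert (HdG : forall x, odom nu x -> is_derive G x (D1 x)) by (intros; apply Derive_correct; auto).
  assert (HdG2 : forall x, odom nu x -> is_derive D1 x (D2 x)) by (intros; apply Derive_correct; auto).
  assert (odom_dom : forall x, odom nu x -> dom nu x) by (intros x [H1 H2]; split; auto; lra).
  assert (d0 : dom nu 0) by (split; [lra| exact Hnu]).
  assert (Gle : forall x y, dom nu x -> dom nu y -> G x <= G y -> x <= y).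
  { intros x y Hx Hy H. apply Rnot_lt_le; intro Hl. specialize (Hincr y x Hy Hx Hl). lra. }
  assert (Glt : forall x y, dom nu x -> dom nu y -> G x < G y -> x < y).
  { intros x y Hx Hy H. destruct (Rle_lt_dec y x) as [Hl|Hl]; auto.
    destruct (Req_dec y x) as [E|E]; [subst; lra|].
    specialize (Hincr y x Hy Hx ltac:(lra)). lra. }
  assert (Gmono : forall x y, dom nu x -> dom nu y -> x <= y -> G x <= G y).
  { intros x y Hx Hy H. destruct (Req_dec x y); [subst; lra|]. left; apply Hincr; auto; lra. }
  assert (GiG : forall x, dom nu x -> Ginv (G x) = x).
  { intros x Hx. destruct (HGinv (G x) (Hmaps x Hx)) as [H1 H2].
    apply Rle_antisym; apply Gle; auto; lra. }
  assert (Gimono : forall p q, 0 <= p -> p <= q -> Ginv p <= Ginv q).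
  { intros p q Hp Hpq. destruct (HGinv p Hp) as [H1 H2]. destruct (HGinv q ltac:(lra)) as [H3 H4].
    apply Gle; auto; lra. }
  assert (Gipos : forall s, 0 < s -> odom nu (Ginv s)).
  { intros s Hs. destruct (HGinv s ltac:(lra)) as [[H1 H2] H3]. split; auto.
    destruct H1 as [H1|H1]; auto. rewrite <- H1 in H3. lra. }
  assert (Gpos : forall x, odom nu x -> 0 < G x).
  { intros x Hx. rewrite <- HG0. apply Hincr; auto. destruct Hx; auto. }
  assert (HdGi : forall s, 0 < s -> is_derive Ginv s (/ D1 (Ginv s))).
  { intros s Hs.
    assert (Hlb : odom nu (Ginv (s/2))) by (apply Gipos; lra).
    assert (Hub : odom nu (Ginv (s+1))) by (apply Gipos; lra).
    assert (Glb : G (Ginv (s/2)) = s/2) by (apply HGinv; lra).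
    assert (Gub : G (Ginv (s+1)) = s+1) by (apply HGinv; lra).
    assert (Hlu : Ginv (s/2) < Ginv (s+1)) by (apply Glt; auto; lra).
    assert (Hin : forall a, Ginv (s/2) <= a <= Ginv (s+1) -> odom nu a)
      by (intros; apply (odom_between nu (Ginv (s/2)) (Ginv (s+1))); auto).
    assert (Hcont : continuity_pt Ginv s).
    { apply (continuity_pt_recip_interv G Ginv (Ginv (s/2)) (Ginv (s+1)) Hlu).
      - intros x y H1 H2 H3. apply Hincr; [apply odom_dom, Hin; lra | apply odom_dom, Hin; lra | lra].
      - intros x H1 H2. rewrite Glb in H1. unfold comp, id. apply HGinv; lra.
      - intros x H1 H2. rewrite Glb in H1; rewrite Gub in H2. split; apply Gimono; lra.
      - intros a Ha. apply (cont_of_der G a (D1 a)). apply HdG, Hin; auto.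
      - rewrite Glb, Gub; lra. }
    pose (Prf := fun a (Ha : Ginv (s/2) <= a <= Ginv (s+1)) =>
       exist (fun l => derivable_pt_lim G a l) (D1 a)
         (proj1 (is_derive_Reals G a (D1 a)) (HdG a (Hin a Ha))) : derivable_pt G a).
    assert (Hinc : Ginv (s/2) <= Ginv s <= Ginv (s+1)) by (split; apply Gimono; lra).
    assert (Hcomp : forall x, s/2 <= x <= s+1 -> comp G Ginv x = id x)
      by (intros x Hx; unfold comp, id; apply HGinv; lra).
    assert (Hneq : derive_pt G (Ginv s) (Prf (Ginv s) Hinc) <> 0).
    { simpl. apply Rgt_not_eq, Hpos. apply Hin; auto. }
    pose proof (derivable_pt_lim_recip_interv G Ginv (s/2) (s+1) s Prf Hcont
                  ltac:(lra) ltac:(lra) Hinc Hcomp Hneq) as H.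
    apply is_derive_Reals. simpl in H.
    replace (/ D1 (Ginv s)) with (1 / D1 (Ginv s)) by (field; auto). exact H. }
  pose (F := fun c x => Ginv (G x + G c)).
  assert (Fodom : forall c x, odom nu c -> odom nu x -> odom nu (F c x)).
  { intros c x Hc Hx. apply Gipos. pose proof (Gpos c Hc). pose proof (Gpos x Hx). lra. }
  assert (HGF : forall c x, odom nu c -> odom nu x -> G (F c x) = G x + G c).
  { intros c x Hc Hx. apply HGinv. pose proof (Gpos c Hc). pose proof (Gpos x Hx). lra. }
  assert (HFx : forall c x, odom nu c -> odom nu x -> x < F c x).
  { intros c x Hc Hx. apply Glt; auto. rewrite HGF; auto. pose proof (Gpos c Hc). lra. }
  assert (HF : forall c, odom nu c -> forall x, odom nu x -> is_derive (F c) x (D1 x / D1 (F c x))).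
  { intros c Hc x Hx.
    assert (Hs : 0 < G x + G c) by (pose proof (Gpos c Hc); pose proof (Gpos x Hx); lra).
    assert (Hi : is_derive (fun y => G y + G c) x (D1 x)).
    { pose proof (is_derive_plus G (fun _ => G c) x (D1 x) zero (HdG x Hx) (is_derive_const _ x)) as H.
      rewrite plus_zero_r in H. exact H. }
    exact (is_derive_comp Ginv (fun y => G y + G c) x _ _ (HdGi _ Hs) Hi). }
  pose (P := fun c x => D1 x / D1 (F c x)).
  pose (P' := fun c x => (D2 x * D1 (F c x) - D1 x * ((D1 x / D1 (F c x)) * D2 (F c x))) / D1 (F c x) ^ 2).
  assert (HP : forall c, odom nu c -> forall x, odom nu x -> is_derive (P c) x (P' c x)).
  { intros c Hc x Hx.
    assert (H1 : is_derive (fun y => D1 (F c y)) x (scal (D1 x / D1 (F c x)) (D2 (F c x))))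
      by exact (is_derive_comp D1 (F c) x _ _ (HdG2 _ (Fodom c x Hc Hx)) (HF c Hc x Hx)).
    assert (Hn : D1 (F c x) <> 0) by (apply Rgt_not_eq, Hpos, Fodom; auto).
    exact (is_derive_div D1 (fun y => D1 (F c y)) x _ _ (HdG2 x Hx) H1 Hn). }
  pose (w := fun z => - D2 z / D1 z ^ 2).
  assert (Hud : forall z, odom nu z -> is_derive (fun x => / D1 x) z (w z)).
  { intros z Hz. apply is_derive_inv; [apply HdG2; auto| apply Rgt_not_eq, Hpos; auto]. }
  assert (Key : forall c x, odom nu c -> odom nu x -> (P' c x <= 0 <-> w (F c x) <= w x)).
  { intros c x Hc Hx.
    assert (Hn : 0 < D1 (F c x)) by (apply Hpos, Fodom; auto).
    assert (Hn2 : 0 < D1 x) by (apply Hpos; auto).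
    assert (E : P' c x = D1 x ^ 2 / D1 (F c x) * (w (F c x) - w x))
      by (unfold P', w; field; split; lra).
    assert (Hk : 0 < D1 x ^ 2 / D1 (F c x)) by (apply Rdiv_lt_0_compat; [apply pow_lt|]; lra).
    rewrite E. split; intro H.
    - apply Rnot_lt_le; intro H'. assert (0 < D1 x ^ 2 / D1 (F c x) * (w (F c x) - w x)) by (apply Rmult_lt_0_compat; lra). lra.
    - assert (0 <= D1 x ^ 2 / D1 (F c x) * (w x - w (F c x))) by (apply Rmult_le_pos; lra). nra. }
  split.
  - intros Hall. apply (conc_of_deriv nu _ w Hud).
    intros z w0 Hz Hw0 Hzw. destruct Hzw as [Hzw|Hzw]; [|subst; lra].
    assert (Hge : 0 <= G w0 - G z) by (specialize (Hincr z w0 (odom_dom z Hz) (odom_dom w0 Hw0) Hzw); lra).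
    destruct (Hrange _ Hge) as [c [Hcd Hcg]].
    assert (Hc : odom nu c).
    { destruct Hcd as [H1 H2]. split; auto. destruct H1 as [H1|H1]; auto. subst c.
      specialize (Hincr z w0 (odom_dom z Hz) (odom_dom w0 Hw0) Hzw). lra. }
    assert (HFz : F c z = w0).
    { unfold F. rewrite Hcg. replace (G z + (G w0 - G z)) with (G w0) by ring. apply GiG; auto. }
    assert (Hconc : concave_on (odom nu) (F c)).
    { intros x y t Hx Hy Ht. apply (Hall c Hc); auto. }
    pose proof (conc_mono nu (F c) (P c) (HF c Hc) Hconc) as HPm.
    assert (HP'z : P' c z <= 0).
    { assert (Ho : is_derive (fun y => - P c y) z (- P' c z))
        by exact (is_derive_opp (P c) z _ (HP c Hc z Hz)).
      assert (0 <= - P' c z); [|lra].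
      apply (Dright (fun y => - P c y) z (- P' c z) 0 (w0 - z) Ho); [lra|].
      intros h Hh.
      assert (Hzh : odom nu (z + h)) by (apply (odom_between nu z w0); auto; lra).
      specialize (HPm z (z + h) Hz Hzh ltac:(lra)). lra. }
    apply (Key c z Hc Hz) in HP'z. rewrite HFz in HP'z. exact HP'z.
  - intros Hu c Hc.
    pose proof (conc_mono nu _ w Hud Hu) as Hw.
    assert (HP'n : forall x, odom nu x -> P' c x <= 0).
    { intros x Hx. apply Key; auto. }
    pose proof (mvt_dec nu (P c) (P' c) (HP c Hc) HP'n) as HPdec.
    pose proof (conc_of_deriv nu (F c) (P c) (HF c Hc) HPdec) as Hfc.
    apply (ext0 nu (F c) Hnu Hfc).
    + intros x y Hx Hy Hxy. unfold F. apply Gimono.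
      * pose proof (Hmaps x Hx). pose proof (Hmaps c (odom_dom c Hc)). lra.
      * specialize (Gmono x y Hx Hy Hxy). lra.
    + intros z Hz. exact (cont_of_der _ z _ (HF c Hc z Hz)).
Qed.
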